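(* Let $E$ be a real finite-dimensional inner product space with inner product $(a,b)\mapsto (ab)$ and norm $|\cdot|$, and let $v:\mathbb{R}\to\mathbb{R}$ be an odd homeomorphism ($v(-\alpha)=-v(\alpha)$). For $a\neq b$ put $e=(a-b)/|a-b|$ and $v_{ab}:E\to E$, $v_{ab}(c)=c+(v((ce))-(ce))e$. Then $v_{ab}$ is a bijection with $v_{ab}^{-1}(c)=c+(v^{-1}((ce))-(ce))e$, and the map $f:E\times E\times[0,1]\to E$ given by $f(a,b,\gamma)=v_{ab}^{-1}\big((1-\gamma)v_{ab}(a)+\gamma v_{ab}(b)\big)$ for $a\ne b$ and $f(a,a,\gamma)=a$ is a continuous solution of the geodesic functional equations (with $D=E\times E$). Moreover, for all $a,b,\gamma$, $|a-f(a,b,\gamma)|+|f(a,b,\gamma)-b|=|a-b|$, so $f(a,b,\gamma)$ lies on the segment joining $a$ and $b$; in particular $f(B\times B\times[0,1])=B$ for every open ball $B\subset E$.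
   Context: For a topological manifold $M$, a solution of the geodesic functional equations is a continuous map $f:D\times[0,1]\to M$, with $D\subset M\times M$ open containing the diagonal, such that for all $(a,b)\in D$ and $\alpha,\beta,\gamma\in[0,1]$: $f(a,b,0)=a$, $f(a,b,1)=b$, $(f(a,b,\alpha),f(a,b,\beta))\in D$, and $f(a,b,(1-\gamma)\alpha+\gamma\beta)=f(f(a,b,\alpha),f(a,b,\beta),\gamma)$. *)

(* Defs.v *)
From HB Require Import structures.
From mathcomp Require Import all_boot all_order all_algebra.
From mathcomp Require Import all_classical all_reals all_analysis.
Set Implicit Arguments. Unset Strict Implicit. Unset Printing Implicit Defensive.
Import Order.TTheory GRing.Theory Num.Theory.
Import numFieldNormedType.Exports.
Local Open Scope classical_set_scope.
Local Open Scope ring_scope.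

Definition geodesic_solution (R : realType) (M : topologicalType)
  (D : set (M * M)) (f : M -> M -> R -> M) : Prop :=
  open D /\ (forall a, D (a, a)) /\
  {within [set x : (M * M) * R | D x.1 /\ x.2 \in `[0, 1]],
     continuous (fun x => f x.1.1 x.1.2 x.2)} /\
  (forall a b, D (a, b) -> forall al be ga : R,
     al \in `[0, 1] -> be \in `[0, 1] -> ga \in `[0, 1] ->
     [/\ f a b 0 = a, f a b 1 = b, D (f a b al, f a b be) &
         f a b ((1 - ga) * al + ga * be) = f (f a b al) (f a b be) ga]).

Definition dotp (R : realType) (n : nat) (u w : 'rV[R]_n) : R :=
  \sum_(i < n) u 0 i * w 0 i.

Definition enorm (R : realType) (n : nat) (u : 'rV[R]_n) : R :=
  Num.sqrt (dotp u u).

Definition unitdir (R : realType) (n : nat) (a b : 'rV[R]_n) : 'rV[R]_n :=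
  (enorm (a - b))^-1 *: (a - b).

Definition vab (R : realType) (n : nat) (v : R -> R) (a b c : 'rV[R]_n)
  : 'rV[R]_n :=
  c + (v (dotp c (unitdir a b)) - dotp c (unitdir a b)) *: unitdir a b.

(* f(a,b,g) = v_ab^{-1}((1-g) v_ab(a) + g v_ab(b)) for a <> b, f(a,a,g) = a;
   v_ab^{-1} is given by the formula with vinv = v^{-1}. *)
Definition geof (R : realType) (n : nat) (v vinv : R -> R)
  (a b : 'rV[R]_n) (g : R) : 'rV[R]_n :=
  if a == b then a
  else vab vinv a b ((1 - g) *: vab v a b a + g *: vab v a b b).

(* Main.v *)
Require Import Defs.
From HB Require Import structures.
From mathcomp Require Import all_boot all_order all_algebra.
From mathcomp Require Import all_classical all_reals all_analysis.
From mathcomp Require Import ring lra.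
Import Order.TTheory GRing.Theory Num.Theory.
Import numFieldNormedType.Exports.
Local Open Scope classical_set_scope.
Local Open Scope ring_scope.
Set Implicit Arguments. Unset Strict Implicit.


Section Alg.
Variables (R : realType) (n : nat).
Implicit Types (u w z : 'rV[R]_n) (k : R).

Lemma dotDl u w z : dotp (u + w) z = dotp u z + dotp w z.
Proof. by rewrite /dotp -big_split; apply: eq_bigr => i _; rewrite mxE mulrDl. Qed.
Lemma dotZl k u z : dotp (k *: u) z = k * dotp u z.
Proof. by rewrite /dotp mulr_sumr; apply: eq_bigr => i _; rewrite mxE mulrA. Qed.
Lemma dotC u w : dotp u w = dotp w u.
Proof. by rewrite /dotp; apply: eq_bigr => i _; rewrite mulrC. Qed.
Lemma dotDr u w z : dotp z (u + w) = dotp z u + dotp z w.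
Proof. by rewrite dotC dotDl !(dotC z). Qed.
Lemma dotZr k u z : dotp z (k *: u) = k * dotp z u.
Proof. by rewrite dotC dotZl dotC. Qed.
Lemma dotNl u z : dotp (- u) z = - dotp u z.
Proof. by rewrite -scaleN1r dotZl mulN1r. Qed.
Lemma dotNr u z : dotp z (- u) = - dotp z u.
Proof. by rewrite dotC dotNl dotC. Qed.
Lemma dotBl u w z : dotp (u - w) z = dotp u z - dotp w z.
Proof. by rewrite dotDl dotNl. Qed.
Lemma dotBr u w z : dotp z (u - w) = dotp z u - dotp z w.
Proof. by rewrite dotDr dotNr. Qed.
Lemma dot_ge0 u : 0 <= dotp u u.
Proof. by rewrite /dotp; apply: sumr_ge0 => i _; rewrite -expr2 sqr_ge0. Qed.
Lemma dot_eq0 u : dotp u u = 0 -> u = 0.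
Proof.
move=> /eqP; rewrite /dotp psumr_eq0 => [/allP H|i _]; last by rewrite -expr2 sqr_ge0.
apply/rowP => i; rewrite mxE.
by have /(_ (mem_index_enum i))/implyP/(_ isT) := H i; rewrite mulf_eq0 orbb => /eqP.
Qed.
Lemma enorm_ge0 u : 0 <= enorm u. Proof. exact: sqrtr_ge0. Qed.
Lemma enorm_sq u : enorm u ^+ 2 = dotp u u.
Proof. by rewrite /enorm sqr_sqrtr // dot_ge0. Qed.
Lemma enormZ k u : enorm (k *: u) = `|k| * enorm u.
Proof. by rewrite /enorm dotZl dotZr mulrA -expr2 sqrtrM ?sqr_ge0 // sqrtr_sqr. Qed.
Lemma enorm0 : enorm (0 : 'rV[R]_n) = 0.
Proof. by rewrite -(scale0r 0) enormZ normr0 mul0r. Qed.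
Lemma enorm_eq0 u : enorm u = 0 -> u = 0.
Proof. by move=> H; apply: dot_eq0; rewrite -enorm_sq H expr0n. Qed.
End Alg.


Section Alg2.
Variables (R : realType) (n : nat).
Implicit Types (a b c u w z : 'rV[R]_n) (k : R).

Lemma unit_props a b : a != b ->
  [/\ 0 < enorm (a - b), a - b = enorm (a - b) *: unitdir a b &
      dotp (unitdir a b) (unitdir a b) = 1].
Proof.
move=> ab; have L0 : enorm (a - b) != 0.
  by apply/eqP => /enorm_eq0 /eqP; rewrite subr_eq0 (negPf ab).
have Lp : 0 < enorm (a - b) by rewrite lt_def L0 enorm_ge0.
split => //; first by rewrite /unitdir scalerA divff // scale1r.
rewrite /unitdir dotZl dotZr mulrA -enorm_sq -expr2 -exprMn mulVf //.
by rewrite expr1n.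
Qed.

Lemma vab_cancel (w1 w2 : R -> R) a b : a != b -> cancel w1 w2 ->
  cancel (vab w1 a b) (vab w2 a b).
Proof.
move=> ab K c; have [_ _ ee] := unit_props ab.
rewrite /vab; set e := unitdir a b.
rewrite dotDl dotZl ee mulr1 addrCA subrr addr0 K -addrA -scalerDl.
have -> : forall p q : R, p - q + (q - p) = 0 by move=> p q; rewrite addrA subrK subrr.
by rewrite scale0r addr0.
Qed.

Lemma vab_diff (w : R -> R) a b x y k : x - y = k *: unitdir a b ->
  exists k', vab w a b x - vab w a b y = k' *: unitdir a b.
Proof.
move=> H; rewrite /vab; set e := unitdir a b.
eexists; rewrite opprD addrACA H -scalerBl -scalerDl; reflexivity.
Qed.

Lemma unitdir_par a b a' b' m : a != b -> m != 0 ->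
  a' - b' = m *: unitdir a b ->
  unitdir a' b' = unitdir a b \/ unitdir a' b' = - unitdir a b.
Proof.
move=> ab m0 H; have [_ _ ee] := unit_props ab.
have en1 : enorm (unitdir a b) = 1 by rewrite /enorm ee sqrtr1.
rewrite /unitdir -/(unitdir a b) H enormZ en1 mulr1 scalerA.
have [mp|mn] := ltrP 0 m.
  by left; rewrite gtr0_norm // mulVf // scale1r.
by right; rewrite ler0_norm // invrN mulNr mulVf // scaleN1r.
Qed.

Lemma vab_par (w : R -> R) (wodd : forall x, w (- x) = - w x) a b a' b' :
  unitdir a' b' = unitdir a b \/ unitdir a' b' = - unitdir a b ->
  vab w a' b' = vab w a b.
Proof.
move=> [] H; apply/funext => c; rewrite /vab H //.
rewrite dotNr wodd scalerN -scaleNr; congr (_ + _ *: _).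
by rewrite opprB opprK addrC.
Qed.

End Alg2.


Section Geo.
Variables (R : realType) (n : nat) (v vinv : R -> R).
Hypotheses (v_cont : continuous v) (vinv_cont : continuous vinv)
  (vK : cancel v vinv) (vinvK : cancel vinv v)
  (v_odd : forall x, v (- x) = - v x).
Implicit Types (a b c u w z : 'rV[R]_n) (k : R).

Lemma vinv_odd x : vinv (- x) = - vinv x.
Proof. by rewrite -{1}(vinvK x) -v_odd vK. Qed.

Lemma between_mono (f : R -> R) : continuous f -> injective f ->
  forall x y z : R, y <= x <= z -> (f y <= f x <= f z) || (f z <= f x <= f y).
Proof.
move=> fc fi x y z /andP[yx xz].
have itvT : forall t : R, t \in `]-oo, +oo[%R by move=> t; rewrite in_itv.
have fc' : {within [set` `]-oo, +oo[%R], continuous f}.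
  exact: continuous_subspaceT.
have fi' : {in `]-oo, +oo[%R &, injective f} by move=> p q _ _; apply: fi.
have [h|h] := leP (f 0) (f 1).
  have M := itv_continuous_inj_le (ex_intro _ 0 (ex_intro _ 1 (And4 (itvT _) (itvT _) ltr01 h))) fc' fi'.
  by rewrite !M ?yx ?xz ?itvT.
have M := itv_continuous_inj_ge (ex_intro _ 0 (ex_intro _ 1 (And4 (itvT _) (itvT _) ltr01 (ltW h)))) fc' fi'.
by rewrite !M ?yx ?xz ?itvT ?orbT.
Qed.


Definition pt a b t := b + (t - dotp b (unitdir a b)) *: unitdir a b.

Section Fix.
Variables (a b : 'rV[R]_n).
Hypothesis ab : a != b.
Local Notation e := (unitdir a b).
Local Notation L := (enorm (a - b)).
Local Notation sa := (dotp a (unitdir a b)).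
Local Notation sb := (dotp b (unitdir a b)).

Lemma pt_dot t : dotp (pt a b t) e = t.
Proof.
have [_ _ ee] := unit_props ab.
by rewrite /pt dotDl dotZl ee mulr1 addrC subrK.
Qed.

Lemma vab_pt (w : R -> R) t : vab w a b (pt a b t) = pt a b (w t).
Proof.
rewrite /vab pt_dot /pt -addrA -scalerDl; congr (_ + _ *: _).
by rewrite addrC addrA subrK.
Qed.

Lemma sa_sb : sa = sb + L.
Proof.
have [_ H ee] := unit_props ab.
have : sa - sb = L by rewrite -dotBl {1}H dotZl ee mulr1.
by move=> <-; rewrite addrC subrK.
Qed.

Lemma pt_a : pt a b sa = a.
Proof.
have [_ H ee] := unit_props ab.
by rewrite /pt sa_sb addrAC subrr add0r -H addrC subrK.
Qed.

Lemma pt_b : pt a b sb = b.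
Proof. by rewrite /pt subrr scale0r addr0. Qed.

Lemma pt_comb g x y :
  (1 - g) *: pt a b x + g *: pt a b y = pt a b ((1 - g) * x + g * y).
Proof.
rewrite /pt !scalerDr !scalerA addrACA -scalerDl subrK scale1r -scalerDl.
congr (_ + _ *: _); ring.
Qed.

Lemma pt_seg t : pt a b t = b + ((t - sb) / L) *: (a - b).
Proof.
have [Lp H ee] := unit_props ab.
by rewrite {2}H scalerA divfK // gt_eqF.
Qed.

Lemma geof_pt g :
  geof v vinv a b g = pt a b (vinv ((1 - g) * v sa + g * v sb)).
Proof.
rewrite /geof (negPf ab).
have E1 : vab v a b a = pt a b (v sa) by rewrite -vab_pt pt_a.
have E2 : vab v a b b = pt a b (v sb) by rewrite -vab_pt pt_b.
by rewrite E1 E2 pt_comb vab_pt.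
Qed.


Lemma pt_inj : injective (pt a b).
Proof. by move=> x y H; rewrite -(pt_dot x) H pt_dot. Qed.

Lemma geof_pt_pt x y g : x != y ->
  geof v vinv (pt a b x) (pt a b y) g = pt a b (vinv ((1 - g) * v x + g * v y)).
Proof.
move=> xy; have pxy : pt a b x != pt a b y.
  by apply: contra xy => /eqP /pt_inj ->.
have D : pt a b x - pt a b y = (x - y) *: e.
  rewrite /pt opprD addrACA subrr add0r -scalerBl; congr (_ *: _).
  by rewrite opprB addrA subrK.
have xy0 : x - y != 0 by rewrite subr_eq0.
have P := unitdir_par ab xy0 D.
rewrite /geof (negPf pxy) (vab_par v_odd P) (vab_par vinv_odd P).
by rewrite !vab_pt pt_comb vab_pt.
Qed.


Lemma geof_FE al be ga :
  geof v vinv a b ((1 - ga) * al + ga * be) =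
  geof v vinv (geof v vinv a b al) (geof v vinv a b be) ga.
Proof.
rewrite !geof_pt.
set W := fun t => (1 - t) * v sa + t * v sb.
have vab_ne : v sa != v sb.
  have [Lp _ _] := unit_props ab.
  apply/eqP => /(can_inj vK) /eqP; rewrite sa_sb -subr_eq0 addrAC subrr add0r.
  by rewrite gt_eqF.
have [E|NE] := eqVneq (vinv (W al)) (vinv (W be)).
  rewrite E /geof eqxx -E.
  have /(can_inj vinvK) : vinv (W al) = vinv (W be) by [].
  rewrite /W => Wab.
  have -> : be = al.
    apply/eqP; rewrite -subr_eq0; apply/eqP.
    have : (be - al) * (v sa - v sb) = 0.
      have -> : (be - al) * (v sa - v sb) = ((1 - al) * v sa + al * v sb) - ((1 - be) * v sa + be * v sb) by ring.
      by rewrite Wab subrr.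
    by move/eqP; rewrite mulf_eq0 [_ - v sb == 0]subr_eq0 (negPf vab_ne) orbF => /eqP.
  by congr (pt a b (vinv _)); ring.
rewrite geof_pt_pt // !vinvK /W; congr (pt a b (vinv _)); ring.
Qed.

Lemma geof_seg g : g \in `[0, 1] ->
  exists mu, 0 <= mu <= 1 /\ geof v vinv a b g = b + mu *: (a - b).
Proof.
rewrite in_itv /= => /andP[g0 g1].
have [Lp _ _] := unit_props ab.
set x := vinv ((1 - g) * v sa + g * v sb).
exists ((x - sb) / L); rewrite geof_pt pt_seg; split => //.
suff /andP[h1 h2] : sb <= x <= sa.
  have := sa_sb => E; apply/andP; split.
    by apply: divr_ge0; lra.
  by rewrite ler_pdivrMr // mul1r; lra.
have sab : sb < sa by rewrite sa_sb ltrDl.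
have [h|h] := leP (v sb) (v sa).
  have /(between_mono vinv_cont (can_inj vinvK)) : v sb <= (1 - g) * v sa + g * v sb <= v sa.
    by apply/andP; split; nra.
  rewrite !vK -/x => /orP[//|/andP[h3 h4]].
  by have := le_trans h3 h4; rewrite leNgt sab.
have /(between_mono vinv_cont (can_inj vinvK)) : v sa <= (1 - g) * v sa + g * v sb <= v sb.
  by apply/andP; split; nra.
rewrite !vK -/x => /orP[/andP[h3 h4]|//].
by have := le_trans h3 h4; rewrite leNgt sab.
Qed.

End Fix.

End Geo.


Section Ball.
Variables (R : realType) (n : nat).
Implicit Types (u w : 'rV[R]_n).

Lemma enorm_lt u r : 0 < r -> (enorm u < r) <-> (dotp u u < r ^+ 2).
Proof.
move=> r0; split => H.
  by rewrite -enorm_sq; apply: ltrXn2r => //; apply: enorm_ge0.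
by rewrite /enorm -(ger0_norm (ltW r0)) -sqrtr_sqr ltr_sqrt // exprn_gt0.
Qed.

Lemma enorm_conv u w mu r : 0 < r -> 0 <= mu <= 1 ->
  enorm u < r -> enorm w < r -> enorm (mu *: u + (1 - mu) *: w) < r.
Proof.
move=> r0 /andP[m0 m1] /(enorm_lt _ r0) hu /(enorm_lt _ r0) hw.
apply/(enorm_lt _ r0).
have D := dot_ge0 (u - w).
move: D; rewrite !(dotDl, dotDr, dotZl, dotZr, dotBl, dotBr) (dotC w u).
move: hu hw; set A := dotp u u; set B := dotp w w; set C := dotp u w => hu hw D.
rewrite dotNr !dotNl dotNr opprK (dotC w u) -/C in D.
have P : 0 <= mu * (1 - mu) * (A + - C + (- C + B)) by apply: mulr_ge0 => //; nra.
have Q : mu * A + (1 - mu) * B < r ^+ 2.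
  have -> : r ^+ 2 = mu * r ^+ 2 + (1 - mu) * r ^+ 2 by ring.
  have [->|mpos] := eqVneq mu 0; first lra.
  have mp : 0 < mu by rewrite lt_def mpos m0.
  apply: ltr_leD; first by rewrite ltr_pM2l.
  by apply: ler_wpM2l; [lra | apply: ltW].
rewrite [X in X < _](_ : _ = mu * A + (1 - mu) * B - mu * (1 - mu) * (A + - C + (- C + B))); first lra.
ring.
Qed.

End Ball.


Lemma fst_cvg (X Y : topologicalType) (x : X * Y) : fst @ nbhs x --> x.1.
Proof. exact: cvg_fst. Qed.
Lemma snd_cvg (X Y : topologicalType) (x : X * Y) : snd @ nbhs x --> x.2.
Proof. exact: cvg_snd. Qed.

Section Cvg.
Variables (R : realType) (n : nat) (T : Type) (F : set_system T).
Hypothesis FF : Filter F.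
Implicit Types (c e : T -> 'rV[R]_n).

Lemma cvg_dotp c e u w : c @ F --> u -> e @ F --> w ->
  (fun y => dotp (c y) (e y)) @ F --> dotp u w.
Proof.
move=> cu ew; rewrite /dotp.
apply: (@cvg_big _ _ +%R 0 xpredT _ _ _ _ (fun i y => c y 0 i * e y 0 i)).
  exact: add_continuous.
move=> i _; apply: cvgM.
  exact: (cvg_comp _ _ cu (@coord_continuous _ 1 n 0 i u)).
exact: (cvg_comp _ _ ew (@coord_continuous _ 1 n 0 i w)).
Qed.

Lemma cvg_enorm c u : c @ F --> u -> (fun y => enorm (c y)) @ F --> enorm u.
Proof.
move=> cu; apply: (cvg_comp _ _ (cvg_dotp cu cu)); exact: sqrt_continuous.
Qed.

Lemma cvg_unitdir c e a b : a != b -> c @ F --> a -> e @ F --> b ->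
  (fun y => unitdir (c y) (e y)) @ F --> unitdir a b.
Proof.
move=> ab ca eb; have [Lp _ _] := unit_props ab.
have D : (fun y => c y - e y) @ F --> a - b by apply: cvgB.
apply: cvgZ => //; apply: cvgV; first by rewrite gt_eqF.
exact: cvg_enorm.
Qed.

Lemma cvg_vab (w : R -> R) c e d a b z : continuous w -> a != b ->
  c @ F --> a -> e @ F --> b -> d @ F --> z ->
  (fun y => vab w (c y) (e y) (d y)) @ F --> vab w a b z.
Proof.
move=> wc ab ca eb dz; rewrite /vab.
have U := cvg_unitdir ab ca eb.
have P := cvg_dotp dz U.
apply: cvgD => //; apply: cvgZ => //; apply: cvgB => //.
exact: (cvg_comp _ _ P (wc _)).
Qed.

End Cvg.


Lemma conv_lt (R : realType) (mu p q e : R) : 0 <= mu <= 1 -> p < e -> q < e ->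
  mu * p + (1 - mu) * q < e.
Proof.
move=> /andP[m0 m1] hp hq.
have -> : e = mu * e + (1 - mu) * e by ring.
have [->|mpos] := eqVneq mu 0; first lra.
have mp : 0 < mu by rewrite lt_def mpos m0.
apply: ltr_leD; first by rewrite ltr_pM2l.
by apply: ler_wpM2l; [lra | apply: ltW].
Qed.

Section Cont.
Variables (R : realType) (n : nat) (v vinv : R -> R).
Hypotheses (v_cont : continuous v) (vinv_cont : continuous vinv)
  (vK : cancel v vinv) (vinvK : cancel vinv v)
  (v_odd : forall x, v (- x) = - v x).

Lemma geof_cont :
  {within [set x : ('rV[R]_n * 'rV[R]_n) * R | [set: 'rV[R]_n * 'rV[R]_n] x.1 /\ x.2 \in `[0, 1]],
     continuous (fun x => geof v vinv x.1.1 x.1.2 x.2)}.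
Proof.
apply/subspace_continuousP => -[[a b] g] [_ gx] /=; rewrite /from_subspace /=.
have c11 : (fun y : ('rV[R]_n * 'rV[R]_n) * R => y.1.1) @ nbhs ((a, b), g) --> a.
  exact: (cvg_comp fst fst (@fst_cvg _ _ ((a, b), g)) (@fst_cvg _ _ (a, b))).
have c12 : (fun y : ('rV[R]_n * 'rV[R]_n) * R => y.1.2) @ nbhs ((a, b), g) --> b.
  exact: (cvg_comp fst snd (@fst_cvg _ _ ((a, b), g)) (@snd_cvg _ _ (a, b))).
have c2 : (fun y : ('rV[R]_n * 'rV[R]_n) * R => y.2) @ nbhs ((a, b), g) --> g.
  exact: (@snd_cvg _ _ ((a, b), g)).
have [ab|ab] := eqVneq a b; last first.
  apply: cvg_within_filter.
  pose G (y : ('rV[R]_n * 'rV[R]_n) * R) := vab vinv y.1.1 y.1.2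
     ((1 - y.2) *: vab v y.1.1 y.1.2 y.1.1 + y.2 *: vab v y.1.1 y.1.2 y.1.2).
  have GE : G ((a, b), g) = geof v vinv a b g by rewrite /G /geof (negPf ab).
  have Gc : G @ nbhs ((a, b), g) --> G ((a, b), g).
    apply: cvg_vab => //; apply: cvgD.
      apply: cvgZ; first by apply: cvgB => //; exact: cvg_cst.
      exact: cvg_vab.
    apply: cvgZ => //; exact: cvg_vab.
  rewrite -GE; apply: cvg_trans Gc; apply: near_eq_cvg.
  have [Lp _ _] := unit_props ab.
  have H := cvgr_gt _ (cvg_enorm _ (cvgB c11 c12)) _ Lp.
  near=> y.
  have Hy : 0 < enorm (y.1.1 - y.1.2) by near: y; exact: H.
  rewrite /G /geof.
  case: eqP => // E; move: Hy; rewrite E subrr enorm0 ltxx //.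
subst b.
have -> : geof v vinv a a g = a by rewrite /geof eqxx.
apply/cvgrPdist_lt => eps e0.
have H1 := proj1 (cvgrPdist_lt _ _) c11 _ e0.
have H2 := proj1 (cvgrPdist_lt _ _) c12 _ e0.
near=> y.
have [_ gy] : [set x : ('rV[R]_n * 'rV[R]_n) * R | [set: 'rV[R]_n * 'rV[R]_n] x.1 /\ x.2 \in `[0, 1]] y.
  by near: y; exact: near_withinT.
have h1 : `|a - y.1.1| < eps by near: y; apply: cvg_within; exact: H1.
have h2 : `|a - y.1.2| < eps by near: y; apply: cvg_within; exact: H2.
have [E|ab'] := eqVneq y.1.1 y.1.2.
  by rewrite /geof E eqxx -E.
have [mu [/andP[m0 m1] ->]] := geof_seg vinv_cont vK vinvK ab' gy.
have -> : a - (y.1.2 + mu *: (y.1.1 - y.1.2)) = mu *: (a - y.1.1) + (1 - mu) *: (a - y.1.2).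
  by apply/rowP => i; rewrite !mxE; ring.
apply: le_lt_trans (ler_normD _ _) _.
rewrite !normrZ ger0_norm // ger0_norm ?subr_ge0 //.
by apply: conv_lt => //; rewrite m0 m1.
Unshelve. all: by end_near.
Qed.
End Cont.

Unset Implicit Arguments. Set Strict Implicit.

Theorem mainTheorem8 (R : realType) (n : nat) (v vinv : R -> R)
  (v_cont : continuous v) (vinv_cont : continuous vinv)
  (vK : cancel v vinv) (vinvK : cancel vinv v)
  (v_odd : forall x, v (- x) = - v x) :
  (forall a b : 'rV[R]_n, a != b ->
     cancel (vab v a b) (vab vinv a b) /\ cancel (vab vinv a b) (vab v a b)) /\
  geodesic_solution [set: 'rV[R]_n * 'rV[R]_n] (geof v vinv) /\
  (forall (a b : 'rV[R]_n) (g : R), g \in `[0, 1] ->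
     enorm (a - geof v vinv a b g) + enorm (geof v vinv a b g - b)
     = enorm (a - b)) /\
  (forall (c : 'rV[R]_n) (r : R), 0 < r ->
     let B := [set x : 'rV[R]_n | enorm (x - c) < r] in
     [set geof v vinv x.1.1 x.1.2 x.2 |
        x in [set x : ('rV[R]_n * 'rV[R]_n) * R |
               B x.1.1 /\ B x.1.2 /\ x.2 \in `[0, 1]]] = B).
Proof.
have gaa : forall (a : 'rV[R]_n) g, geof v vinv a a g = a by move=> a g; rewrite /geof eqxx.
split; first by move=> a b ab; split; apply: vab_cancel.
split.
  split; first exact: openT.
  split; first by [].
  split; first exact: geof_cont.
  move=> a b _ al be ga _ _ _.
  have [->|ab] := eqVneq a b; first by rewrite !gaa.
  split => //.
  - by rewrite (geof_pt v vinv ab) subr0 mul1r mul0r addr0 vK (pt_a ab).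
  - by rewrite (geof_pt v vinv ab) subrr mul0r mul1r add0r vK pt_b.
  - exact: geof_FE.
split.
  move=> a b g gi.
  have [->|ab] := eqVneq a b; first by rewrite gaa subrr enorm0 addr0.
  have [mu [/andP[m0 m1] ->]] := geof_seg vinv_cont vK vinvK ab gi.
  have -> : a - (b + mu *: (a - b)) = (1 - mu) *: (a - b).
    by apply/rowP => i; rewrite !mxE; ring.
  have -> : b + mu *: (a - b) - b = mu *: (a - b).
    by apply/rowP => i; rewrite !mxE; ring.
  rewrite !enormZ ger0_norm ?subr_ge0 // ger0_norm //; ring.
move=> c r r0 B; apply/seteqP; split.
  move=> _ [[[x y] g] /= [Bx [By gi]] <-].
  have [E|xy] := eqVneq x y; first by rewrite E gaa.
  have [mu [mi ->]] := geof_seg vinv_cont vK vinvK xy gi.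
  rewrite /B /=.
  have -> : y + mu *: (x - y) - c = mu *: (x - c) + (1 - mu) *: (y - c).
    by apply/rowP => i; rewrite !mxE; ring.
  exact: enorm_conv.
move=> x Bx; exists ((x, x), 0) => /=; last exact: gaa.
by split => //; split => //; rewrite in_itv /= lexx ler01.
Qed.
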